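(* Work in second-order logic (with the Comprehension scheme) in the language whose only non-logical primitive is the binary relation $\in$, and assume only the axioms Extensionality, $\forall a\forall b(\forall x(x\in a\leftrightarrow x\in b)\to a=b)$, and Separation, $\forall F\forall a\exists b\forall x(x\in b\leftrightarrow (F(x)\wedge x\in a))$. Then the levels are well-ordered by membership. That is: (i) for every property $F$, if some level is $F$, then there is a level $s$ that is $F$ such that no level $r\in s$ is $F$; and (ii) for any levels $s,t$: $s\in t$ or $s=t$ or $t\in s$.
   Context: For a set $a$, its potentiation is $\mathrm{pot}(a)=\{x : \exists c(x\subseteq c\wedge c\in a)\}$, when this set exists (i.e. ''$b=\mathrm{pot}(a)$'' abbreviates $\forall x(x\in b\leftrightarrow\exists c(x\subseteq c\wedge c\in a))$). A set $h$ is a history iff for every $x\in h$, $x=\mathrm{pot}(x\cap h)$. A set $s$ is a level iff $s=\mathrm{pot}(h)$ for some history $h$. *)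

(* Defs.v *)
(* The universe of sets is an arbitrary type U with a binary relation mem
   (x ∈ a  is  mem x a).  Second-order properties are predicates U -> Prop. *)

Section Potentiation.
Variable U : Type.
Variable mem : U -> U -> Prop.

Definition subset (x c : U) : Prop := forall z, mem z x -> mem z c.

Definition is_pot (a b : U) : Prop :=
  forall x, mem x b <-> exists c, subset x c /\ mem c a.

(* h is a history: for every x ∈ h, x = pot(x ∩ h), where "c ∈ x ∩ h"
   is unfolded as "c ∈ x ∧ c ∈ h". *)
Definition history (h : U) : Prop :=
  forall x, mem x h ->
    forall y, mem y x <-> exists c, subset y c /\ (mem c x /\ mem c h).

Definition level (s : U) : Prop := exists h, history h /\ is_pot h s.

Definition Extensionality : Prop :=
  forall a b : U, (forall x, mem x a <-> mem x b) -> a = b.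

Definition Separation : Prop :=
  forall (F : U -> Prop) (a : U), exists b, forall x, mem x b <-> (F x /\ mem x a).

End Potentiation.

Arguments subset {U} mem x c.
Arguments is_pot {U} mem a b.
Arguments history {U} mem h.
Arguments level {U} mem s.
Arguments Extensionality {U} mem.
Arguments Separation {U} mem.

(* Main.v *)
Require Import Defs.
From Stdlib Require Import Classical.

Lemma russell (U : Type) (mem : U -> U -> Prop) (Hsep : Separation mem) (N : U -> Prop) :
  (forall y, N y -> exists c, N c /\ forall z, subset mem z c -> mem z y) ->
  forall y, ~ N y.
Proof.
  intros H x Nx.
  destruct (Hsep (fun z => ~ mem z z /\ forall y, N y -> mem z y) x) as [r Hr].
  assert (Hall : forall y, N y -> mem r y).
  { intros y Ny. destruct (H y Ny) as [c [Nc Hc]]. apply Hc. intros z Hz.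
    apply Hr in Hz. destruct Hz as [[_ Hz] _]. apply Hz; exact Nc. }
  assert (Hrr : ~ mem r r).
  { intro Hm. pose proof Hm as Hm'. apply Hr in Hm'. destruct Hm' as [[Hn _] _]. exact (Hn Hm). }
  apply Hrr. apply Hr. split; [split; [exact Hrr|exact Hall]| exact (Hall x Nx)].
Qed.

Lemma level_potent (U : Type) (mem : U -> U -> Prop) s x y :
  level mem s -> subset mem x y -> mem y s -> mem x s.
Proof.
  intros [h [Hh Hs]] Hxy Hy. apply Hs in Hy. destruct Hy as [c [Hyc Hc]].
  apply Hs. exists c. split; [intros z Hz; apply Hyc, Hxy, Hz | exact Hc].
Qed.

Lemma level_trans (U : Type) (mem : U -> U -> Prop) s y z :
  level mem s -> mem z y -> mem y s -> mem z s.
Proof.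
  intros [h [Hh Hs]] Hz Hy. apply Hs in Hy. destruct Hy as [c [Hyc Hc]].
  pose proof (Hyc z Hz) as Hzc. apply (Hh c Hc) in Hzc.
  destruct Hzc as [d [Hzd [_ Hd]]].
  apply Hs. exists d. auto.
Qed.

Definition hQ {U : Type} (mem : U -> U -> Prop) h c :=
  forall e f, mem e c -> mem e h -> mem f e -> mem f h -> mem f c.

Lemma hist_Q (U : Type) (mem : U -> U -> Prop) (Hsep : Separation mem) h :
  history mem h -> forall c, mem c h -> hQ mem h c.
Proof.
  intros Hh.
  assert (Hn : forall c, ~ (mem c h /\ ~ hQ mem h c)).
  { apply (russell U mem Hsep (fun c => mem c h /\ ~ hQ mem h c)).
    intros c [Hc HnQ].
    apply NNPP; intro Hno.
    apply HnQ. intros e f He Heh Hf Hfh.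
    assert (Qe : hQ mem h e).
    { apply NNPP; intro HnQe. apply Hno. exists e. split; [split; assumption|].
      intros z Hz. apply (Hh c Hc). exists e. auto. }
    apply (Hh e Heh) in Hf. destruct Hf as [g [Hfg [Hge Hgh]]].
    assert (Hge' : subset mem g e).
    { intros w Hw. apply (Hh g Hgh) in Hw. destruct Hw as [v [Hwv [Hvg Hvh]]].
      apply (Hh e Heh). exists v. split; [exact Hwv|split; [apply (Qe g v); assumption| exact Hvh]]. }
    apply (Hh c Hc). exists e. split; [intros z Hz; apply Hge', Hfg, Hz | split; assumption]. }
  intros c Hc. apply NNPP; intro H. exact (Hn c (conj Hc H)).
Qed.

Lemma hist_elem_level (U : Type) (mem : U -> U -> Prop) (Hsep : Separation mem) h c :
  history mem h -> mem c h -> level mem c.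
Proof.
  intros Hh Hc.
  destruct (Hsep (fun d => mem d c) h) as [k Hk].
  exists k. split.
  - intros y Hy. apply Hk in Hy. destruct Hy as [Hyc Hyh]. intro w. rewrite (Hh y Hyh w). split.
    + intros [d [Hwd [Hdy Hdh]]]. exists d. split; [auto| split; [auto | apply Hk; split; [apply (hist_Q U mem Hsep h Hh c Hc y d); auto | auto]]].
    + intros [d [Hwd [Hdy Hdk]]]. apply Hk in Hdk. exists d. tauto.
  - intro w. rewrite (Hh c Hc w). split.
    + intros [d [Hwd [Hdc Hdh]]]. exists d. split; [auto | apply Hk; auto].
    + intros [d [Hwd Hdk]]. apply Hk in Hdk. exists d. tauto.
Qed.

Lemma L2 (U : Type) (mem : U -> U -> Prop) (Hsep : Separation mem) s x :
  level mem s -> mem x s -> exists r, level mem r /\ mem r s /\ subset mem x r.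
Proof.
  intros Ls Hx. pose proof Ls as [h [Hh Hs]]. apply Hs in Hx. destruct Hx as [c [Hxc Hc]].
  exists c. split; [exact (hist_elem_level U mem Hsep h c Hh Hc)|split; [|exact Hxc]].
  apply Hs. exists c. split; [intros z Hz; exact Hz | exact Hc].
Qed.

Theorem theorem12 (U : Type) (mem : U -> U -> Prop)
  (Hext : Extensionality mem) (Hsep : Separation mem) :
  (forall F : U -> Prop,
     (exists s, level mem s /\ F s) ->
     exists s, level mem s /\ F s /\ (forall r, level mem r -> mem r s -> ~ F r))
  /\
  (forall s t, level mem s -> level mem t -> mem s t \/ s = t \/ mem t s).
Proof.
  assert (WF : forall F : U -> Prop, (exists s, level mem s /\ F s) ->
     exists s, level mem s /\ F s /\ (forall r, level mem r -> mem r s -> ~ F r)).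
  { intros F [s0 [Ls0 Fs0]]. apply NNPP; intro Hno.
    apply (russell U mem Hsep (fun y => level mem y /\ F y)) with (y:=s0); [| auto].
    intros y [Ly Fy]. apply NNPP; intro Hn2. apply Hno. exists y. split; [auto|split;[auto|]].
    intros r Lr Hr Fr. apply Hn2. exists r. split; [auto|].
    intros z Hz. exact (level_potent U mem y z r Ly Hz Hr). }
  split; [exact WF|].
  intros s t Ls Lt. apply NNPP; intro Hinc.
  destruct (WF (fun a => exists b, level mem b /\ ~ (mem a b \/ a = b \/ mem b a)))
    as [s1 [Ls1 [[t0 [Lt0 Hi0]] Hmin1]]].
  { exists s. split; [auto|]. exists t. auto. }
  destruct (WF (fun b => ~ (mem s1 b \/ s1 = b \/ mem b s1))) as [t1 [Lt1 [Hi1 Hmin2]]].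
  { exists t0; auto. }
  apply Hi1. right; left.
  apply Hext. intro x. split; intro Hx.
  - destruct (L2 U mem Hsep s1 x Ls1 Hx) as [r [Lr [Hr Hxr]]].
    apply (level_potent U mem t1 x r Lt1 Hxr).
    destruct (classic (mem r t1 \/ r = t1 \/ mem t1 r)) as [[H|[H|H]]|H].
    + exact H.
    + exfalso; apply Hi1; right; right; subst; exact Hr.
    + exfalso; apply Hi1; right; right; exact (level_trans U mem s1 r t1 Ls1 H Hr).
    + exfalso; apply (Hmin1 r Lr Hr). exists t1. split; auto.
  - destruct (L2 U mem Hsep t1 x Lt1 Hx) as [r [Lr [Hr Hxr]]].
    apply (level_potent U mem s1 x r Ls1 Hxr).
    destruct (classic (mem s1 r \/ s1 = r \/ mem r s1)) as [[H|[H|H]]|H].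
    + exfalso; apply Hi1; left; exact (level_trans U mem t1 r s1 Lt1 H Hr).
    + exfalso; apply Hi1; left; subst; exact Hr.
    + exact H.
    + exfalso; exact (Hmin2 r Lr Hr H).
Qed.
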